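(* Let $(a_k)_{k\ge1}$ be a sequence of natural numbers (all $a_k\ge1$), let $m,n\in\mathbb N$ and let $T=(i_1,\dots,i_m;\varepsilon_1,\dots,\varepsilon_m)$ with $i_r\in\{1,\dots,n\}$, $\varepsilon_r\in\{\pm1\}$. Then $$\mathrm{mult}(T)=\sum_{\substack{\varnothing\ne J\subseteq\min(\mathcal U_T)\\ \bigvee J=\hat1}}(-1)^{|J|+1}.$$
   Context: $\Pi_m$ denotes the set of partitions of $[m]=\{1,\dots,m\}$ into nonempty blocks, partially ordered by refinement ($\pi\le\sigma$ iff every block of $\pi$ is contained in a block of $\sigma$); $\hat1$ is the one-block partition $\{[m]\}$, and $\bigvee J$ denotes the join (least upper bound) of a family $J\subseteq\Pi_m$ in this lattice. $|\pi|$ is the number of blocks of $\pi$, and the Möbius function satisfies $\mu(\pi,\hat1)=(-1)^{|\pi|-1}(|\pi|-1)!$. For $B\subseteq[m]$ put $\Sigma(B;T)=\sum_{r\in B}\varepsilon_r a_{i_r}$. Let $\mathcal U_T=\{\pi\in\Pi_m:\Sigma(B;T)=0\text{ for every block }B\in\pi\}$, let $\min(\mathcal U_T)$ be the set of minimal elements of $\mathcal U_T$ with respect to $\le$, and define the multiplicity $\mathrm{mult}(T)=\sum_{\pi\in\mathcal U_T}\mu(\pi,\hat1)$. *)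

(* Defs.v *)
From mathcomp Require Import all_boot all_order all_algebra.
Set Implicit Arguments. Unset Strict Implicit. Unset Printing Implicit Defensive.
Import GRing.Theory Num.Theory.
Local Open Scope ring_scope.

(* Partitions of [m] = 'I_m (element r : 'I_m stands for r+1) are
   represented as sets of blocks P : {set {set 'I_m}} with
   finset's [partition P [set: 'I_m]] (cover = [m], pairwise disjoint,
   no empty block). *)
Definition partm (m : nat) (P : {set {set 'I_m}}) : bool :=
  partition P [set: 'I_m].

Definition refines (m : nat) (P Q : {set {set 'I_m}}) : bool :=
  [forall B in P, [exists C in Q, B \subset C]].

Definition hat1 (m : nat) : {set {set 'I_m}} := [set [set: 'I_m]].

Definition is_join (m : nat) (J : {set {set {set 'I_m}}})
    (s : {set {set 'I_m}}) : bool :=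
  [&& partm s, [forall P in J, refines P s] &
      [forall t : {set {set 'I_m}},
         (partm t && [forall P in J, refines P t]) ==> refines s t]].

(* Möbius value mu(pi, hat1) = (-1)^(|pi|-1) (|pi|-1)! *)
Definition mu1 (m : nat) (P : {set {set 'I_m}}) : int :=
  (-1) ^+ (#|P|.-1) * (#|P|.-1)`!%:Z.

Definition SigmaB (m : nat) (a : nat -> nat) (i : 'I_m -> nat)
    (eps : 'I_m -> int) (B : {set 'I_m}) : int :=
  \sum_(r in B) eps r * (a (i r))%:Z.

Definition UT (m : nat) (a : nat -> nat) (i : 'I_m -> nat)
    (eps : 'I_m -> int) : {set {set {set 'I_m}}} :=
  [set P : {set {set 'I_m}} | partm P && [forall B in P, SigmaB a i eps B == 0]].

Definition minUT (m : nat) (a : nat -> nat) (i : 'I_m -> nat)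
    (eps : 'I_m -> int) : {set {set {set 'I_m}}} :=
  [set P in UT a i eps | [forall Q in UT a i eps, refines Q P ==> (Q == P)]].

Definition mult (m : nat) (a : nat -> nat) (i : 'I_m -> nat)
    (eps : 'I_m -> int) : int :=
  \sum_(P in UT a i eps) mu1 P.

(* Main.v *)
Require Import Defs.
From mathcomp Require Import all_boot all_order all_algebra zify.
Import GRing.Theory Num.Theory.
Local Open Scope ring_scope.
Set Implicit Arguments. Unset Strict Implicit. Unset Printing Implicit Defensive.

Lemma partm_cov m (P : {set {set 'I_m}}) x :
  partm P -> exists2 B, B \in P & x \in B.
Proof.
move=> hP; have: x \in cover P by rewrite (cover_partition hP) inE.
by case/bigcupP=> B hB hx; exists B.
Qed.

Lemma partm_uniq m (P : {set {set 'I_m}}) A B x :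
  partm P -> A \in P -> B \in P -> x \in A -> x \in B -> A = B.
Proof.
move=> hP hA hB hxA hxB; have tP := partition_trivIset hP.
by rewrite -(def_pblock tP hA hxA) (def_pblock tP hB hxB).
Qed.

Lemma partm_ne m (P : {set {set 'I_m}}) B : partm P -> B \in P -> B != set0.
Proof. exact: partition_neq0. Qed.

Lemma partmF m (P : {set {set 'I_m}}) (f : 'I_m -> {set 'I_m}) :
  (forall x, f x \in P) -> (forall x, x \in f x) ->
  (forall A x, A \in P -> x \in A -> A = f x) -> set0 \notin P -> partm P.
Proof.
move=> fP fx fA P0; rewrite /partm /partition P0 andbT; apply/andP; split.
  apply/eqP/setP=> x; rewrite inE; apply/bigcupP; exists (f x) => //.
apply/trivIsetP=> A B hA hB hne; rewrite -setI_eq0; apply/eqP/setP=> x.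
rewrite !inE; apply/negbTE/negP=> /andP[xa xb].
by move: hne; rewrite (fA A x) // (fA B x) // eqxx.
Qed.

Definition splitb m (b0 : {set 'I_m}) (s : {set {set 'I_m}}) C :=
  s :\ C :|: [set b0; C :\: b0].
Definition mergeb m (b0 : {set 'I_m}) (s : {set {set 'I_m}}) C :=
  s :\ b0 :\ C :|: [set b0 :|: C].

Lemma split_partm m (s : {set {set 'I_m}}) (C b0 : {set 'I_m}) :
  partm s -> C \in s -> b0 \subset C -> b0 != set0 -> b0 != C ->
  partm (splitb b0 s C).
Proof.
move=> hs hC sub b00 bC.
have CD0 : C :\: b0 != set0.
  have : b0 \proper C by rewrite properEneq bC sub.
  by case/properP=> _ [x xC xb]; apply/set0Pn; exists x; rewrite inE xb.
pose f x := if x \in b0 then b0 else if x \in C then C :\: b0 else pblock s x.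
have covs : cover s = [set: 'I_m] by exact: cover_partition.
have fA : forall A x, A \in splitb b0 s C -> x \in A -> A = f x.
  move=> A x; rewrite /splitb /f !inE => /orP[/andP[AC As]|/orP[/eqP->|/eqP->]] xA.
  - have xC : x \notin C.
      by apply/negP=> xC; move/negP: AC; apply; rewrite (partm_uniq hs As hC xA xC).
    have xb : x \notin b0 by apply/negP=> xb; move/negP: xC; apply; exact: (subsetP sub).
    by rewrite (negPf xb) (negPf xC) (def_pblock (partition_trivIset hs) As xA).
  - by rewrite xA.
  - by move: xA; rewrite inE => /andP[/negPf -> ->].
apply: (partmF (f := f)).
- move=> x; rewrite /splitb /f !inE; case: ifP => xb; first by rewrite eqxx orbT.
  case: ifP => xC; first by rewrite eqxx !orbT.
  have ps : pblock s x \in s by apply: pblock_mem; rewrite covs inE.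
  rewrite ps andbT; apply/orP; left; apply/negP=> /eqP e.
  by move: (mem_pblock s x); rewrite e xC covs inE.
- move=> x; rewrite /f; case: ifP => // xb; case: ifP => xC; first by rewrite inE xb xC.
  by rewrite mem_pblock covs inE.
- exact: fA.
- rewrite /splitb !inE; apply/negP=> /orP[/andP[_ h]|/orP[]/eqP h].
  + by move: (partition_neq0 hs h); rewrite eqxx.
  + by move: b00; rewrite -h eqxx.
  + by move: CD0; rewrite -h eqxx.
Qed.

Lemma merge_partm m (s : {set {set 'I_m}}) (C b0 : {set 'I_m}) :
  partm s -> b0 \in s -> C \in s -> C != b0 -> partm (mergeb b0 s C).
Proof.
move=> hs hb hC Cb.
have covs : cover s = [set: 'I_m] by exact: cover_partition.
pose f x := if x \in b0 :|: C then b0 :|: C else pblock s x.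
apply: (partmF (f := f)).
- move=> x; rewrite /mergeb /f; case: ifP => xbC; first by rewrite !inE eqxx orbT.
  have ps : pblock s x \in s by apply: pblock_mem; rewrite covs inE.
  have xp : x \in pblock s x by rewrite mem_pblock covs inE.
  rewrite !inE ps andbT; apply/orP; left; apply/andP; split; apply/negP=> /eqP e;
    by move: xbC; rewrite !inE -e xp ?orbT.
- by move=> x; rewrite /f; case: ifP => // _; rewrite mem_pblock covs inE.
- move=> A x; rewrite /mergeb /f !inE => /orP[/andP[AC /andP[Ab As]]|/eqP->] xA; last by move: xA; rewrite !inE => ->.
  have xb : x \notin b0 by apply/negP=> xb; move/negP: Ab; apply; rewrite (partm_uniq hs As hb xA xb).
  have xC : x \notin C by apply/negP=> xC; move/negP: AC; apply; rewrite (partm_uniq hs As hC xA xC).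
  by rewrite (negPf xb) (negPf xC) (def_pblock (partition_trivIset hs) As xA).
- rewrite /mergeb !inE; apply/negP=> /orP[/andP[_ /andP[_ h]]|/eqP h].
  + by move: (partition_neq0 hs h); rewrite eqxx.
  + have /set0Pn[x xb] := partition_neq0 hs hb.
    have : x \in b0 :|: C by rewrite inE xb.
    by rewrite -h inE.
Qed.

Lemma merge_disj m (s : {set {set 'I_m}}) (C b0 : {set 'I_m}) x :
  partm s -> b0 \in s -> C \in s -> C != b0 -> x \in b0 -> x \in C -> False.
Proof. by move=> hs hb hC Cb xb xC; move/negP: Cb; apply; rewrite (partm_uniq hs hC hb xC xb). Qed.

Lemma merge_notin m (s : {set {set 'I_m}}) (C b0 : {set 'I_m}) :
  partm s -> b0 \in s -> C \in s -> C != b0 -> b0 :|: C \notin s.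
Proof.
move=> hs hb hC Cb; apply/negP=> h.
have /set0Pn[x xb] := partition_neq0 hs hb.
have /set0Pn[y yC] := partition_neq0 hs hC.
have e : b0 :|: C = b0 by apply: (partm_uniq hs h hb (x := x)); rewrite ?inE xb.
have : y \in b0 by rewrite -e inE yC orbT.
by move=> yb; apply: (merge_disj hs hb hC Cb yb yC).
Qed.

Lemma merge_diff m (s : {set {set 'I_m}}) (C b0 : {set 'I_m}) :
  partm s -> b0 \in s -> C \in s -> C != b0 -> (b0 :|: C) :\: b0 = C.
Proof.
move=> hs hb hC Cb; apply/setP=> y; rewrite !inE; case: (boolP (y \in b0)) => //= yb.
by apply/esym/negP=> yC; apply: (merge_disj hs hb hC Cb yb yC).
Qed.

Definition muk (k : nat) : int := (-1) ^+ (k.-1) * (k.-1)`!%:Z.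

Lemma mu1E m (P : {set {set 'I_m}}) : mu1 P = muk #|P|.
Proof. by []. Qed.


Lemma muk_cancel k : muk k.+2 + muk k.+1 *+ k.+1 = 0.
Proof.
rewrite /muk /= factS PoszM exprS.
by rewrite mulN1r mulNr -mulrnAr -mulr_natl natz addrC subrr.
Qed.

Lemma cancel_sum m (F : {set {set {set 'I_m}}}) (b0 : {set 'I_m}) :
  b0 != set0 -> b0 != setT ->
  (forall s, s \in F -> partm s) ->
  (forall s C x, s \in F -> C \in s -> x \in b0 -> x \in C -> b0 \subset C) ->
  (forall s C, s \in F -> C \in s -> b0 \subset C -> C != b0 -> splitb b0 s C \in F) ->
  (forall s C, s \in F -> b0 \in s -> C \in s -> C != b0 -> mergeb b0 s C \in F) ->
  \sum_(s in F) mu1 s = 0.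
Proof.
move=> b00 b0T hF hbl hsp hme.
have [x0 x0b] := set0Pn _ b00.
pose key (s : {set {set 'I_m}}) := if b0 \in s then s else splitb b0 s (pblock s x0).
have keyG : forall s, s \in F -> (key s \in F) && (b0 \in key s).
  move=> s sF; rewrite /key; case: ifP => [->|bs]; first by rewrite sF.
  have covs := cover_partition (hF s sF).
  have ps : pblock s x0 \in s by apply: pblock_mem; rewrite covs inE.
  have xp : x0 \in pblock s x0 by rewrite mem_pblock covs inE.
  have sub := hbl _ _ _ sF ps x0b xp.
  have ne : pblock s x0 != b0 by apply/negP=> /eqP e; move: bs; rewrite -e ps.
  by rewrite hsp //= /splitb !inE eqxx orbT.
rewrite (partition_big key (fun r => (r \in F) && (b0 \in r))) /=; last exact keyG.
apply: big1 => r /andP[rF br].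
have hr := hF r rF.
have E : [set s | (s \in F) && (key s == r)] = r |: [set mergeb b0 r C | C in r :\ b0].
  apply/setP=> s; rewrite !inE; apply/idP/idP.
  - case/andP=> sF /eqP; rewrite /key; case: ifP => bs; first by move->; rewrite eqxx.
    move=> ks; apply/orP; right; apply/imsetP.
    have hs := hF s sF.
    have covs := cover_partition hs.
    set C := pblock s x0.
    have hC : C \in s by apply: pblock_mem; rewrite covs inE.
    have xp : x0 \in C by rewrite mem_pblock covs inE.
    have sub := hbl _ _ _ sF hC x0b xp.
    have ne : C != b0 by apply/negP=> /eqP e; move: bs; rewrite -e hC.
    have CDn : C :\: b0 \notin s.
      apply/negP=> h.
      have : b0 \proper C by rewrite properEneq eq_sym ne sub.
      case/properP=> _ [y yC yb].
      have e : C :\: b0 = C by apply: (partm_uniq hs h hC (x := y)); rewrite // inE yb.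
      by move: xp; rewrite -e inE x0b.
    have CDb : C :\: b0 != b0.
      by apply/negP=> /eqP e; have := x0b; rewrite -{1}e inE x0b.
    have bU : b0 :|: C :\: b0 = C.
      apply/setP=> y; rewrite !inE; case: (boolP (y \in b0)) => //= yb.
      by rewrite (subsetP sub).
    exists (C :\: b0); first by rewrite -ks /splitb !inE CDb eqxx !orbT.
    rewrite -ks; apply/setP=> D; rewrite /mergeb /splitb !inE bU.
    case: (eqVneq D C) => [->|DC]; first by rewrite hC orbT.
    rewrite orbF; case: (eqVneq D b0) => [->|Db] /=; first by rewrite bs andbF.
    case: (eqVneq D (C :\: b0)) => [->|DCb] /=; first by rewrite (negPf CDn).
    by rewrite orbF.
  - case/orP=> [/eqP->|/imsetP[C hC ->]]; first by rewrite rF /key br eqxx.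
    move: hC; rewrite !inE => /andP[Cb Cr].
    have hM := hme _ _ rF br Cr Cb.
    rewrite hM /=.
    have nin := merge_notin hr br Cr Cb.
    have bM : b0 \notin mergeb b0 r C.
      rewrite /mergeb !inE eqxx /= andbF /=; apply/negP=> /eqP e.
      by move: nin; rewrite -e br.
    have pM : pblock (mergeb b0 r C) x0 = b0 :|: C.
      apply: def_pblock; first exact: partition_trivIset (merge_partm hr br Cr Cb).
        by rewrite /mergeb !inE eqxx orbT.
      by rewrite inE x0b.
    rewrite /key (negPf bM) pM; apply/eqP/setP=> D.
    rewrite /splitb /mergeb (merge_diff hr br Cr Cb) !inE.
    case: (eqVneq D b0) => [->|Db]; first by rewrite br !orbT.
    case: (eqVneq D C) => [->|DC]; first by rewrite Cr !orbT.
    rewrite /= !orbF; case: (eqVneq D (b0 :|: C)) => [->|DbC] /=; first by apply/esym/negbTE.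
    by rewrite orbF.
have -> : \sum_(i | (i \in F) && (key i == r)) mu1 i =
          \sum_(i in [set s | (s \in F) && (key s == r)]) mu1 i.
  by apply: eq_bigl => s; rewrite inE.
rewrite E big_setU1 /=; last first.
  apply/imsetP=> [[C hC e]]; move: hC; rewrite !inE => /andP[Cb Cr].
  have : b0 \in mergeb b0 r C by rewrite -e.
  rewrite /mergeb !inE eqxx /= andbF /= => /eqP e2.
  by move: (merge_notin hr br Cr Cb); rewrite -e2 br.
rewrite big_imset /=; last first.
  move=> C C' hC hC' e; move: hC hC'; rewrite !inE => /andP[Cb Cr] /andP[Cb' Cr'].
  have : b0 :|: C \in mergeb b0 r C' by rewrite -e /mergeb !inE eqxx orbT.
  rewrite /mergeb !inE => /orP[/andP[_ /andP[_ h]]|/eqP e2].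
    by move: (merge_notin hr br Cr Cb); rewrite h.
  by rewrite -(merge_diff hr br Cr Cb) e2 (merge_diff hr br Cr' Cb').
have cr : #|r| = (#|r :\ b0|).+1 by rewrite (cardsD1 b0 r) br.
rewrite (eq_bigr (fun _ => muk #|r|.-1)); last first.
  move=> C; rewrite !inE => /andP[Cb Cr].
  rewrite mu1E /mergeb setUC cardsU1.
  have -> : b0 :|: C \notin r :\ b0 :\ C.
    by rewrite !inE (negPf (merge_notin hr br Cr Cb)) !andbF.
  have : #|r :\ b0| = (#|r :\ b0 :\ C|).+1 by rewrite (cardsD1 C (r :\ b0)) !inE Cb Cr.
  by rewrite cr => ->.
rewrite sumr_const mu1E.
have : (0 < #|r :\ b0|)%N.
  have [x1 x1b] : exists x1, x1 \notin b0.
    case: (pickP (fun x => x \notin b0)) => [x1 h|h]; first by exists x1.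
    by move/negP: b0T; case; apply/eqP/setP=> y; move: (h y) => /negbFE ->; rewrite inE.
  have covr := cover_partition hr.
  rewrite card_gt0; apply/set0Pn; exists (pblock r x1); rewrite !inE.
  rewrite pblock_mem ?covr ?inE // andbT; apply/negP=> /eqP e.
  by move: (mem_pblock r x1); rewrite e covr inE (negPf x1b).
rewrite cr; case: #|r :\ b0| => [|k] //= _.
exact: muk_cancel.
Qed.

Definition satJ m (J : {set {set {set 'I_m}}}) (S : {set 'I_m}) :=
  forall Q B x y, Q \in J -> B \in Q -> x \in B -> y \in B -> (x \in S) = (y \in S).

Definition closedJ m (J : {set {set {set 'I_m}}}) (S : {set 'I_m}) : bool :=
  [forall Q in J, [forall B in Q, [forall x in B, [forall y in B, (x \in S) == (y \in S)]]]].

Lemma closedJP m (J : {set {set {set 'I_m}}}) S : reflect (satJ J S) (closedJ J S).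
Proof.
apply: (iffP idP).
  move=> h Q B x y hQ hB hx hy.
  move/forallP: h => /(_ Q); rewrite hQ /= => /forallP/(_ B); rewrite hB /=.
  move=> /forallP/(_ x); rewrite hx /= => /forallP/(_ y); rewrite hy /=.
  by move/eqP.
move=> h; apply/forallP=> Q; apply/implyP=> hQ; apply/forallP=> B; apply/implyP=> hB.
apply/forallP=> x; apply/implyP=> hx; apply/forallP=> y; apply/implyP=> hy.
by apply/eqP; exact: h hQ hB hx hy.
Qed.

Lemma refines_sat m (Q s : {set {set 'I_m}}) :
  partm Q -> partm s ->
  refines Q s <-> (forall C, C \in s -> forall B x y, B \in Q -> x \in B -> y \in B ->
                     (x \in C) = (y \in C)).
Proof.
move=> hQ hs; split.
  move=> h C hC B x y hB hx hy.
  move/forallP: h => /(_ B); rewrite hB /= => /existsP[D /andP[hD BD]].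
  have xD := subsetP BD x hx; have yD := subsetP BD y hy.
  have -> : (x \in C) = (C == D).
    apply/idP/eqP=> [xC|->//]; exact: (partm_uniq hs hC hD xC xD).
  by apply/idP/idP=> [/eqP->//|yC]; apply/eqP; exact: (partm_uniq hs hC hD yC yD).
move=> h; apply/forallP=> B; apply/implyP=> hB.
have /set0Pn[x hx] := partition_neq0 hQ hB.
have [D hD xD] := partm_cov x hs.
apply/existsP; exists D; rewrite hD /=; apply/subsetP=> y hy.
by rewrite -(h D hD B x y hB hx hy).
Qed.

Lemma refines_refl m (P : {set {set 'I_m}}) : refines P P.
Proof. by apply/forallP=> B; apply/implyP=> hB; apply/existsP; exists B; rewrite hB subxx. Qed.

Lemma refines_trans m (A B C : {set {set 'I_m}}) :
  refines A B -> refines B C -> refines A C.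
Proof.
move=> hAB hBC; apply/forallP=> X; apply/implyP=> hX.
move/forallP: hAB => /(_ X); rewrite hX /= => /existsP[Y /andP[hY XY]].
move/forallP: hBC => /(_ Y); rewrite hY /= => /existsP[Z /andP[hZ YZ]].
by apply/existsP; exists Z; rewrite hZ (subset_trans XY YZ).
Qed.

Lemma refines_sub m (A B : {set {set 'I_m}}) :
  partm A -> refines A B -> refines B A -> A \subset B.
Proof.
move=> hA hAB hBA; apply/subsetP=> X hX.
move/forallP: hAB => /(_ X); rewrite hX /= => /existsP[Y /andP[hY XY]].
move/forallP: hBA => /(_ Y); rewrite hY /= => /existsP[X' /andP[hX' YX']].
have /set0Pn[x hx] := partition_neq0 hA hX.
have e : X = X' by apply: (partm_uniq hA hX hX' hx); exact: (subsetP YX') _ (subsetP XY _ hx).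
have -> : X = Y by apply/eqP; rewrite eqEsubset XY e YX'.
exact: hY.
Qed.

Lemma refines_anti m (A B : {set {set 'I_m}}) :
  partm A -> partm B -> refines A B -> refines B A -> A = B.
Proof.
by move=> hA hB h1 h2; apply/eqP; rewrite eqEsubset !refines_sub.
Qed.

Lemma notT_wit m (b0 : {set 'I_m}) : b0 != setT -> exists x, x \notin b0.
Proof.
move=> b0T; case: (pickP (fun x => x \notin b0)) => [x1 h|h]; first by exists x1.
by move/negP: b0T; case; apply/eqP/setP=> y; move: (h y) => /negbFE ->; rewrite inE.
Qed.

Lemma sum_F m (J : {set {set {set 'I_m}}}) : (0 < m)%N -> (forall Q, Q \in J -> partm Q) ->
  \sum_(s in [set s | partm s && [forall Q in J, refines Q s]]) mu1 s =
  (if is_join J (hat1 m) then 1 else 0).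
Proof.
move=> hm hJ.
set F := [set s | partm s && [forall Q in J, refines Q s]].
have memF : forall s, s \in F <-> partm s /\ (forall C, C \in s -> satJ J C).
  move=> s; rewrite inE; split.
    case/andP=> hs /forallP hr; split=> // C hC Q B x y hQ hB hx hy.
    have := hr Q; rewrite hQ /= => /(refines_sat (hJ Q hQ) hs) h.
    exact: h C hC B x y hB hx hy.
  case=> hs h; rewrite hs /=; apply/forallP=> Q; apply/implyP=> hQ.
  apply/(refines_sat (hJ Q hQ) hs) => C hC B x y hB hx hy.
  exact: h C hC Q B x y hQ hB hx hy.
have satI : forall A B, satJ J A -> satJ J B -> satJ J (A :&: B).
  by move=> A B hA hB Q B' x y hQ hB' hx hy; rewrite !inE (hA Q B' x y) // (hB Q B' x y).
have satU : forall A B, satJ J A -> satJ J B -> satJ J (A :|: B).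
  by move=> A B hA hB Q B' x y hQ hB' hx hy; rewrite !inE (hA Q B' x y) // (hB Q B' x y).
have satD : forall A B, satJ J A -> satJ J B -> satJ J (A :\: B).
  by move=> A B hA hB Q B' x y hQ hB' hx hy; rewrite !inE (hA Q B' x y) // (hB Q B' x y).
have satC : forall A, satJ J A -> satJ J (~: A).
  by move=> A hA Q B' x y hQ hB' hx hy; rewrite !inE (hA Q B' x y).
have satT : satJ J [set: 'I_m] by move=> Q B x y _ _ _ _; rewrite !inE.
pose x0 := Ordinal hm.
have hT : ([set: 'I_m] != set0) && closedJ J setT.
  by apply/andP; split; [apply/set0Pn; exists x0; rewrite inE | exact/closedJP].
case: (@arg_minnP _ setT (fun S : {set 'I_m} => (S != set0) && closedJ J S) (fun S : {set 'I_m} => #|S|) hT) => b0 /andP[b00 /closedJP b0c] b0min.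
have minb : forall S, satJ J S -> S \subset b0 -> S != set0 -> S = b0.
  move=> S hS Sb Sn; apply/eqP; rewrite eqEcard Sb /=; apply: b0min; rewrite Sn /=.
  exact/closedJP.
have hbl : forall s C x, s \in F -> C \in s -> x \in b0 -> x \in C -> b0 \subset C.
  move=> s C x sF hC xb xC; have [_ hsC] := (memF s).1 sF.
  have e := minb (C :&: b0) (satI _ _ (hsC C hC) b0c) (subsetIr _ _).
  rewrite -e ?subsetIl //; apply/set0Pn; exists x; rewrite inE xC.
  exact: xb.
case: (eqVneq b0 setT) => [b0T|b0T].
  have h1F : hat1 m \in F.
    apply/memF; split.
      apply: (partmF (f := fun _ => [set: 'I_m])) => [x|x|A x|].
      - by rewrite /hat1 inE.
      - by rewrite inE.
      - by rewrite /hat1 inE => /eqP.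
      - by rewrite /hat1 inE eq_sym; apply/set0Pn; exists x0; rewrite inE.
    by move=> C; rewrite /hat1 inE => /eqP->.
  have Fe : F = [set hat1 m].
    apply/setP=> s; apply/idP/set1P => [sF|->//].
    have [hs2 _] := (memF s).1 sF.
    have [C hC xC] := partm_cov x0 hs2.
    have x0b : x0 \in b0 by rewrite b0T inE.
    have TC := hbl s C x0 sF hC x0b xC.
    have CT : C = setT by apply/eqP; rewrite eqEsubset subsetT -b0T.
    apply/setP=> D; rewrite /hat1 inE; apply/idP/eqP=> [hD|->]; last by rewrite -CT.
    have /set0Pn[y hy] := partition_neq0 hs2 hD.
    by rewrite (partm_uniq hs2 hD hC hy) // CT inE.
  have [hp1 _] := (memF _).1 h1F.
  have hj : is_join J (hat1 m).
    apply/and3P; split => //.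
      by move: h1F; rewrite inE => /andP[_ ->].
    apply/forallP=> t; apply/implyP=> /andP[ht hr].
    have tF : t \in F by rewrite inE ht hr.
    by move: tF; rewrite Fe => /set1P ->; exact: refines_refl.
  by rewrite hj Fe big_set1 mu1E /hat1 cards1.
have [x1 x1b] := notT_wit b0T.
have [xb xbb] := set0Pn _ b00.
pose t := [set b0; ~: b0].
have ht : partm t.
  apply: (partmF (f := fun x => if x \in b0 then b0 else ~: b0)) => [x|x|A x|].
  - by rewrite /t !inE; case: ifP; rewrite eqxx ?orbT.
  - by case: ifP => h //; rewrite inE h.
  - rewrite /t !inE => /orP[]/eqP-> hx; first by rewrite hx.
    by move: hx; rewrite inE => /negPf->.
  - rewrite /t !inE negb_or eq_sym b00 /=; apply/negP=> /eqP e.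
    by have := x1b; rewrite -in_setC -e inE.
have tF : t \in F.
  apply/memF; split=> // C; rewrite /t !inE => /orP[]/eqP->; first exact: b0c.
  exact: satC.
have hj : is_join J (hat1 m) = false.
  apply/negbTE/negP=> /and3P[_ _ /forallP/(_ t)].
  move: tF; rewrite inE => /andP[_ ->]; rewrite ht /= => /forallP/(_ setT).
  rewrite /hat1 inE eqxx /= => /existsP[C /andP[]].
  rewrite /t !inE => /orP[]/eqP-> TC.
    by move/negP: b0T; apply; rewrite eqEsubset subsetT.
  by have := subsetP TC xb (in_setT xb); rewrite inE xbb.
rewrite hj; apply: (cancel_sum (b0 := b0)) => //.
- by move=> s /memF[].
- move=> s C sF hC sub Cb; have [hs hsat] := (memF s).1 sF.
  apply/memF; split; first by apply: split_partm => //; rewrite eq_sym.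
  rewrite /splitb => D; rewrite !inE => /orP[/andP[_ hD]|/orP[]/eqP->].
  + exact: hsat.
  + exact: b0c.
  + exact: satD (hsat C hC) b0c.
- move=> s C sF bs hC Cb; have [hs hsat] := (memF s).1 sF.
  apply/memF; split; first exact: merge_partm.
  rewrite /mergeb => D; rewrite !inE => /orP[/andP[_ /andP[_ hD]]|/eqP->].
  + exact: hsat.
  + exact: satU b0c (hsat C hC).
Qed.


Lemma alt_sum (X : finType) (S : {set X}) x :
  x \in S -> \sum_(J : {set X} | J \subset S) (-1) ^+ #|J| = 0 :> int.
Proof.
move=> xS; rewrite (bigID (fun J : {set X} => x \in J)) /=.
rewrite (reindex_onto (fun J : {set X} => x |: J) (fun J : {set X} => J :\ x)) /=; last first.
  by move=> J /andP[_ xJ]; rewrite setD1K.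
rewrite (eq_big (fun J : {set X} => (J \subset S) && (x \notin J)) (fun J : {set X} => - (-1) ^+ #|J| : int)).
- by rewrite sumrN addNr.
- move=> J; case: (boolP (x \in J)) => xJ.
    have -> : ((x |: J) :\ x == J) = false.
      by apply/negbTE/eqP=> e; have := xJ; rewrite -e !inE eqxx.
    by rewrite !andbF.
  by rewrite setU1K // eqxx subUset sub1set xS setU11 !andbT.
- move=> J /andP[_ /eqP e].
  have xJ : x \notin J by rewrite -e !inE eqxx.
  by rewrite cardsU1 xJ /= exprS mulN1r.
Qed.

Lemma alt1 (X : finType) (S : {set X}) :
  S != set0 -> \sum_(J : {set X} | (J != set0) && (J \subset S)) (-1) ^+ (#|J|.+1) = 1 :> int.
Proof.
case/set0Pn=> x xS; have := alt_sum xS.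
rewrite (bigD1 set0) ?sub0set //= cards0 expr0 => h.
move/eqP: h; rewrite addrC addr_eq0 => /eqP e.
rewrite (eq_bigl (fun J : {set X} => (J \subset S) && (J != set0))); last by move=> J; rewrite andbC.
rewrite (eq_bigr (fun J : {set X} => - (-1) ^+ #|J| : int)); last by move=> J _; rewrite exprS mulN1r.
by rewrite sumrN e opprK.
Qed.

Lemma UT_up m (a : nat -> nat) (i : 'I_m -> nat) (eps : 'I_m -> int) Q P :
  Q \in UT a i eps -> partm P -> refines Q P -> P \in UT a i eps.
Proof.
rewrite !inE => /andP[hQ /forallP hz] hP hr; rewrite hP /=.
apply/forallP=> C; apply/implyP=> hC.
pose P' := [set B in Q | B \subset C].
have cov : cover P' = C.
  apply/setP=> x; apply/bigcupP/idP => [[B] |xC].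
    by rewrite inE => /andP[_ BC] xB; exact: (subsetP BC).
  have [B hB xB] := partm_cov x hQ.
  exists B => //; rewrite inE hB /=.
  move/forallP: hr => /(_ B); rewrite hB /= => /existsP[D /andP[hD BD]].
  by rewrite (partm_uniq hP hC hD xC (subsetP BD x xB)).
have sP : P' \subset Q by apply/subsetP=> B; rewrite inE => /andP[].
rewrite /SigmaB -cov big_trivIset; last exact: trivIsetS sP (partition_trivIset hQ).
rewrite big1 // => B; rewrite inE => /andP[hB _].
by move: (hz B); rewrite hB /= => /eqP.
Qed.

Lemma min_exists m (a : nat -> nat) (i : 'I_m -> nat) (eps : 'I_m -> int) P :
  P \in UT a i eps -> exists2 Q, Q \in minUT a i eps & refines Q P.
Proof.
suff: forall n P, (#|[set Q in UT a i eps | refines Q P]| <= n)%N -> P \in UT a i eps ->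
  exists2 Q, Q \in minUT a i eps & refines Q P by move=> h; exact: h.
elim=> [|n IH] {}P hn hP.
  have : P \in [set Q in UT a i eps | refines Q P] by rewrite inE hP refines_refl.
  by rewrite leqn0 cards_eq0 in hn; rewrite (eqP hn) inE.
case: (boolP (P \in minUT a i eps)) => hmin; first by exists P => //; exact: refines_refl.
move: hmin; rewrite inE hP /= => /forallPn [Q]; rewrite !negb_imply => /and3P[hQ hQP hne].
have pP : partm P by move: hP; rewrite inE => /andP[].
have pQ : partm Q by move: hQ; rewrite inE => /andP[].
have [|Q' hQ' hQ'Q] := IH Q _ hQ; last by exists Q' => //; exact: refines_trans hQ'Q hQP.
rewrite -ltnS; apply: leq_trans hn; apply: proper_card; apply/properP; split.
  apply/subsetP=> R; rewrite !inE => /andP[-> hR] /=; exact: refines_trans hR hQP.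
exists P; first by rewrite inE hP refines_refl.
rewrite inE hP /=; apply/negP=> hPQ.
by move/negP: hne; apply; rewrite (refines_anti pQ pP hQP hPQ).
Qed.

Unset Implicit Arguments.
Theorem lemma5p2 (a : nat -> nat) (m n : nat) (i : 'I_m -> nat)
    (eps : 'I_m -> int)
    (ha : forall k : nat, (1 <= k)%N -> (1 <= a k)%N)
    (hm : (1 <= m)%N)
    (hi : forall r : 'I_m, (1 <= i r <= n)%N)
    (heps : forall r : 'I_m, eps r = 1 \/ eps r = -1) :
  mult a i eps =
  \sum_(J : {set {set {set 'I_m}}} |
          [&& J != set0, J \subset minUT a i eps & is_join J (hat1 m)])
     (-1) ^+ (#|J|.+1).
Proof.
rewrite /mult.
set U := UT a i eps; set M := minUT a i eps.
pose below P := [set Q in M | refines Q P].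
have MU : forall Q, Q \in M -> Q \in U by move=> Q; rewrite inE => /andP[].
have Upart : forall Q, Q \in U -> partm Q by move=> Q; rewrite inE => /andP[].
have step1 : \sum_(P in U) mu1 P =
  \sum_(P in U) \sum_(J | (J != set0) && (J \subset below P)) mu1 P * (-1) ^+ (#|J|.+1).
  apply: eq_bigr => P hP; rewrite -mulr_sumr alt1 ?mulr1 //.
  have [Q hQ hQP] := min_exists hP; apply/set0Pn; exists Q; by rewrite inE hQ hQP.
have step2 : forall P, P \in U ->
  \sum_(J | (J != set0) && (J \subset below P)) mu1 P * (-1) ^+ (#|J|.+1) =
  \sum_(J | (J != set0) && (J \subset M))
     (if [forall Q in J, refines Q P] then mu1 P * (-1) ^+ (#|J|.+1) else 0).
  move=> P hP; rewrite big_mkcond [RHS]big_mkcond; apply: eq_bigr => J _.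
  have -> : (J \subset below P) = (J \subset M) && [forall Q in J, refines Q P].
    apply/subsetP/andP => [h|[/subsetP h1 /forallP h2] Q hQ].
      split; first by apply/subsetP=> Q hQ; have := h Q hQ; rewrite inE => /andP[].
      by apply/forallP=> Q; apply/implyP=> hQ; have := h Q hQ; rewrite inE => /andP[].
    by rewrite inE h1 //=; have := h2 Q; rewrite hQ.
  by case: (J != set0); case: (J \subset M); case: ([forall Q in J, refines Q P]).
rewrite step1 (eq_bigr _ step2) exchange_big /=.
have -> : \sum_(J | [&& J != set0, J \subset M & is_join J (hat1 m)]) (-1) ^+ (#|J|.+1) =
  \sum_(J | (J != set0) && (J \subset M)) (if is_join J (hat1 m) then (-1) ^+ (#|J|.+1) else 0 : int).
  rewrite big_mkcond [RHS]big_mkcond; apply: eq_bigr => J _.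
  by case: (J != set0); case: (J \subset M); case: (is_join J (hat1 m)).
apply: eq_bigr => J /andP[J0 JM].
rewrite -big_mkcondr /= -mulr_suml.
have [Q0 hQ0] := set0Pn _ J0.
rewrite (eq_bigl (mem [set s | partm s && [forall Q in J, refines Q s]])); last first.
  move=> P; rewrite !inE.
  apply/idP/idP => [/andP[/andP[hP _] hr]|/andP[hP hr]]; first by rewrite hP hr.
  have := (forallP hr) Q0; rewrite hQ0 /= => hQ0P.
  have := UT_up (MU _ (subsetP JM _ hQ0)) hP hQ0P.
  by rewrite inE hr andbT.
rewrite sum_F //; last by move=> Q hQ; apply: Upart; apply: MU; exact: (subsetP JM).
by case: (is_join J (hat1 m)); rewrite ?mul1r ?mul0r.
Qed.
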